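(* A finite Boolean inverse monoid is fundamental if and only if its groupoid of atoms is principal.
   Context: An inverse semigroup is a semigroup in which each $s$ has a unique $s^{-1}$ with $s=ss^{-1}s$, $s^{-1}=s^{-1}ss^{-1}$; natural partial order $s\le t$ iff $s=ts^{-1}s$; $a,b$ are compatible if $a^{-1}b,ab^{-1}$ are idempotents. A Boolean inverse monoid is an inverse monoid with zero in which finite compatible subsets have joins with respect to $\le$, multiplication distributes over them, and the idempotents form a Boolean algebra. An inverse semigroup $S$ is fundamental if every element commuting with all idempotents of $S$ is itself an idempotent. An atom is a non-zero element $s$ with $t\le s\Rightarrow t\in\{0,s\}$; the atoms form a groupoid under the restricted product $x\cdot y=xy$, defined when $x^{-1}x=yy^{-1}$. A groupoid is principal if for any identities $e,f$ there is at most one arrow from $e$ to $f$. *)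

(* Defs.v *)
From mathcomp Require Import all_boot.
Set Implicit Arguments. Unset Strict Implicit. Unset Printing Implicit Defensive.

Section InverseMonoid.
Variables (T : finType) (mul : T -> T -> T) (inv : T -> T) (one zero : T).

Definition inverse_semigroup : Prop :=
  (forall a b c, mul a (mul b c) = mul (mul a b) c) /\
  (forall s, s = mul s (mul (inv s) s) /\ inv s = mul (inv s) (mul s (inv s))) /\
  (forall s t, s = mul s (mul t s) -> t = mul t (mul s t) -> t = inv s).

Definition idempotent (e : T) : Prop := mul e e = e.

Definition nle (s t : T) : Prop := s = mul t (mul (inv s) s).

Definition compatible (a b : T) : Prop :=
  idempotent (mul (inv a) b) /\ idempotent (mul a (inv b)).

Definition compatible_set (A : {set T}) : Prop :=
  forall a b, a \in A -> b \in A -> compatible a b.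

Definition is_join (A : {set T}) (x : T) : Prop :=
  (forall a, a \in A -> nle a x) /\
  (forall y, (forall a, a \in A -> nle a y) -> nle x y).

Definition idem_lub (e f j : T) : Prop :=
  idempotent j /\ nle e j /\ nle f j /\
  (forall g, idempotent g -> nle e g -> nle f g -> nle j g).
Definition idem_glb (e f m : T) : Prop :=
  idempotent m /\ nle m e /\ nle m f /\
  (forall g, idempotent g -> nle g e -> nle g f -> nle g m).

Definition idempotents_boolean : Prop :=
  (forall e, idempotent e -> nle zero e /\ nle e one) /\
  exists (join meet : T -> T -> T) (compl : T -> T),
    (forall e f, idempotent e -> idempotent f ->
       idem_lub e f (join e f) /\ idem_glb e f (meet e f)) /\
    (forall e f g, idempotent e -> idempotent f -> idempotent g ->
       meet e (join f g) = join (meet e f) (meet e g)) /\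
    (forall e, idempotent e ->
       idempotent (compl e) /\ meet e (compl e) = zero /\ join e (compl e) = one).

Definition boolean_inverse_monoid : Prop :=
  inverse_semigroup /\
  (forall s, mul one s = s /\ mul s one = s) /\
  (forall s, mul zero s = zero /\ mul s zero = zero) /\
  (forall A : {set T}, compatible_set A -> exists x, is_join A x) /\
  (forall (A : {set T}) x s, compatible_set A -> is_join A x ->
     is_join (mul s @: A) (mul s x) /\ is_join ((fun a => mul a s) @: A) (mul x s)) /\
  idempotents_boolean.

Definition fundamental : Prop :=
  forall s, (forall e, idempotent e -> mul s e = mul e s) -> idempotent s.

Definition atom (s : T) : Prop :=
  s <> zero /\ forall t, nle t s -> t = zero \/ t = s.

(* Groupoid of atoms: arrows are atoms x, with domain inv x * x and range
   x * inv x; identities are the idempotent atoms.  Principal: for any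
   identities e f there is at most one arrow from e to f. *)
Definition atom_arrow (e f x : T) : Prop :=
  atom x /\ mul (inv x) x = e /\ mul x (inv x) = f.

Definition atom_groupoid_principal : Prop :=
  forall e f, atom e -> idempotent e -> atom f -> idempotent f ->
    forall x y, atom_arrow e f x -> atom_arrow e f y -> x = y.

End InverseMonoid.

(* Main.v *)
Require Import Defs.
From mathcomp Require Import all_boot.
From Stdlib Require Import Classical.
Set Implicit Arguments. Unset Strict Implicit. Unset Printing Implicit Defensive.

Section Pf.
Variables (T : finType) (mul : T -> T -> T) (inv : T -> T) (one zero : T).
Local Notation "x ** y" := (mul x y) (at level 40, left associativity).
Hypothesis assoc : forall a b c, a ** (b ** c) = a ** b ** c.
Hypothesis invax : forall s, s = s ** (inv s ** s) /\ inv s = inv s ** (s ** inv s).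
Hypothesis uniq_inv : forall s t, s = s ** (t ** s) -> t = t ** (s ** t) -> t = inv s.
Hypothesis zerol : forall s, zero ** s = zero.
Hypothesis zeror : forall s, s ** zero = zero.

Local Notation idem e := (e ** e = e).

Lemma pre a u v : u = v -> a ** u = a ** v. Proof. by move->. Qed.

Lemma invL s : s ** inv s ** s = s. Proof. by rewrite -assoc -(invax s).1. Qed.
Lemma invR s : inv s ** s ** inv s = inv s. Proof. by rewrite -assoc -(invax s).2. Qed.
Lemma inv_inv s : inv (inv s) = s.
Proof. symmetry; apply: uniq_inv; by rewrite assoc ?invL ?invR. Qed.
Lemma idem_inv e : idem e -> inv e = e.
Proof. move=> He; symmetry; apply: uniq_inv; by rewrite !He. Qed.
Lemma idemA e a : idem e -> a ** e ** e = a ** e.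
Proof. by move=> He; rewrite -assoc He. Qed.

Lemma idem_mul e f : idem e -> idem f -> idem (e ** f).
Proof.
move=> He Hf; set x := inv (e ** f).
have hL := invL (e ** f); have hR := invR (e ** f); rewrite -/x in hL hR.
have h1 : e ** f ** x ** e ** f = e ** f by rewrite -[RHS]hL !assoc.
have h2 a : a ** x ** e ** f ** x = a ** x.
  by rewrite -[in RHS]hR !assoc.
have hx : f ** x ** e = x.
  apply: uniq_inv; rewrite !assoc ?(idemA _ Hf) ?(idemA _ He) ?h1 ?h2 //.
have xx : idem x by rewrite -{1}hx -{2}hx ?assoc h2 hx.
have := idem_inv xx; rewrite /x inv_inv => ->; exact: xx.
Qed.

Lemma idem_comm e f : idem e -> idem f -> e ** f = f ** e.
Proof.
move=> He Hf; have Hef := idem_mul He Hf; have Hfe := idem_mul Hf He.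
rewrite -(idem_inv Hef); symmetry; apply: uniq_inv.
  by rewrite !assoc (idemA _ Hf) (idemA _ He) -assoc Hef.
by rewrite !assoc (idemA _ He) (idemA _ Hf) -assoc Hfe.
Qed.

Lemma idem_ss s : idem (s ** inv s). Proof. by rewrite assoc invL. Qed.
Lemma idem_is s : idem (inv s ** s). Proof. by rewrite assoc invR. Qed.


Lemma invLa a s : a ** s ** inv s ** s = a ** s.
Proof. by rewrite -(assoc (a ** s)) -assoc -(invax s).1. Qed.
Lemma invRa a s : a ** inv s ** s ** inv s = a ** inv s.
Proof. by rewrite -(assoc (a ** inv s)) -assoc -(invax s).2. Qed.
Lemma commA a e f : idem e -> idem f -> a ** e ** f = a ** f ** e.
Proof. by move=> He Hf; rewrite -!assoc (idem_comm He Hf). Qed.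
Lemma commA2 a x y e : idem (x ** y) -> idem e -> a ** x ** y ** e = a ** e ** x ** y.
Proof. by move=> H1 H2; rewrite -(assoc a x y) commA // assoc. Qed.
Lemma commA2' a x y e : idem (x ** y) -> idem e -> a ** e ** x ** y = a ** x ** y ** e.
Proof. by move=> H1 H2; symmetry; apply: commA2. Qed.
Lemma commA22 a x y u v : idem (x ** y) -> idem (u ** v) ->
  a ** x ** y ** u ** v = a ** u ** v ** x ** y.
Proof. by move=> H1 H2; rewrite -(assoc _ u v) (@commA2 a x y (u ** v)) // !assoc. Qed.

Lemma inv_mul s t : inv (s ** t) = inv t ** inv s.
Proof.
symmetry; apply: uniq_inv; rewrite !assoc.
  by rewrite (@commA22 s t (inv t) (inv s) s (idem_ss t) (idem_is s)) invL invLa.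
by rewrite (@commA22 (inv t) (inv s) s t (inv t) (idem_is s) (idem_ss t)) invR invRa.
Qed.

Local Notation le s t := (nle mul inv s t).

Lemma nle_refl s : le s s. Proof. exact: (invax s).1. Qed.

Lemma nle_idem e t : idem e -> le (t ** e) t.
Proof.
move=> He; rewrite /nle inv_mul (idem_inv He) !assoc.
by rewrite (@commA2' t (inv t) t e (idem_is t) He) invL idemA.
Qed.

Lemma nle_trans r s t : le r s -> le s t -> le r t.
Proof.
move=> Hr Hs; rewrite /nle in Hr Hs; rewrite {1}Hr {1}Hs -assoc.
by apply: nle_idem; apply: idem_mul; apply: idem_is.
Qed.

Lemma nle_antisym s t : le s t -> le t s -> s = t.
Proof.
move=> Hs Ht; rewrite /nle in Hs Ht.
have E : s = s ** (inv t ** t) ** (inv s ** s) by rewrite -Ht.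
rewrite -assoc (idem_comm (idem_is t) (idem_is s)) assoc -(invax s).1 -Ht in E.
exact: E.
Qed.

Lemma nle_idem_idem a e : idem e -> le a e -> idem a.
Proof. move=> He ->; apply: idem_mul => //; exact: idem_is. Qed.

Lemma nle_idemE a e : idem a -> le a e -> a = e ** a.
Proof. by move=> Ha Hle; rewrite {1}Hle (idem_inv Ha) Ha. Qed.

Lemma join_uniq A x y : is_join mul inv A x -> is_join mul inv A y -> x = y.
Proof. by move=> [Jx1 Jx2] [Jy1 Jy2]; apply: nle_antisym; [apply: Jx2|apply: Jy2]. Qed.

Lemma glb_mul e f : idem e -> idem f -> idem_glb mul inv e f (e ** f).
Proof.
move=> He Hf; split; first exact: idem_mul.
split; first exact: nle_idem.
split; first by rewrite (idem_comm He Hf); exact: nle_idem.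
move=> g Hg Hge Hgf; rewrite /nle (idem_inv Hg) Hg -assoc -(nle_idemE Hg Hgf).
exact: nle_idemE.
Qed.

Lemma glb_uniq e f m1 m2 : idem_glb mul inv e f m1 -> idem_glb mul inv e f m2 -> m1 = m2.
Proof.
move=> [I1 [L1 [R1 G1]]] [I2 [L2 [R2 G2]]].
by apply: nle_antisym; [apply: G2|apply: G1].
Qed.

Lemma lub_uniq e f m1 m2 : idem_lub mul inv e f m1 -> idem_lub mul inv e f m2 -> m1 = m2.
Proof.
move=> [I1 [L1 [R1 G1]]] [I2 [L2 [R2 G2]]].
by apply: nle_antisym; [apply: G1|apply: G2].
Qed.

Lemma atom_below u : u <> zero -> exists b, atom mul inv zero b /\ le b u.
Proof.
suff: forall n u, #|[set t | t == u ** (inv t ** t)]| <= n -> u <> zero ->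
   exists b, atom mul inv zero b /\ le b u by move=> H; apply: (H _ u (leqnn _)).
elim=> [|n IH] {}u Hc Hu.
  have H0 : 0 < #|[set t | t == u ** (inv t ** t)]|.
    by apply/card_gt0P; exists u; rewrite inE -(invax u).1.
  by move: Hc; rewrite leqNgt H0.
case: (classic (atom mul inv zero u)) => [Au|nAu].
  by exists u; split => //; exact: nle_refl.
have [t [Htu [Ht0 Htu']]] : exists t, le t u /\ t <> zero /\ t <> u.
  apply: NNPP => C; apply: nAu; split => // t Hle.
  case: (classic (t = zero)) => [|H0]; first by left.
  case: (classic (t = u)) => [|H1]; first by right.
  by case: C; exists t.
have Hp : [set t0 | t0 == t ** (inv t0 ** t0)] \proper [set t | t == u ** (inv t ** t)].
  apply/properP; split.
    apply/subsetP => z; rewrite !inE => /eqP Hz; apply/eqP.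
    exact: (nle_trans Hz Htu).
  exists u; first by rewrite inE -(invax u).1.
  rewrite inE; apply/eqP => Hut; apply: Htu'; exact: nle_antisym.
have [b [Ab Hb]] := IH t (leq_trans (proper_card Hp) Hc) Ht0.
by exists b; split => //; exact: (nle_trans Hb).
Qed.


Hypothesis onel : forall s, one ** s = s.
Hypothesis oner : forall s, s ** one = s.
Hypothesis Hjoin : forall A : {set T}, compatible_set mul inv A -> exists x, is_join mul inv A x.
Hypothesis Hdist : forall (A : {set T}) x s, compatible_set mul inv A -> is_join mul inv A x ->
     is_join mul inv (mul s @: A) (s ** x) /\ is_join mul inv ((fun a => a ** s) @: A) (x ** s).
Hypothesis Hbool : idempotents_boolean mul inv one zero.

Lemma compat_idem a b : idem a -> idem b -> compatible mul inv a b.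
Proof.
move=> Ia Ib; split; rewrite /Defs.idempotent ?(idem_inv Ia) ?(idem_inv Ib); exact: idem_mul.
Qed.

Lemma fund_princ : fundamental mul -> atom_groupoid_principal mul inv zero.
Proof.
move=> Hf e f Ae Ie Af If x y [Ax [dx rx]] [Ay [dy ry]].
pose g := inv x ** y.
have Hg1 : inv g ** g = e.
  by rewrite /g inv_mul inv_inv !assoc -(assoc _ x) rx -ry assoc invR dy.
have Hg2 : g ** inv g = e.
  by rewrite /g inv_mul inv_inv !assoc -(assoc _ y) ry -rx assoc invR dx.
have ge : g = g ** e by rewrite -Hg1 assoc invL.
have eg : g = e ** g by rewrite -Hg2 invL.
have ige : inv g = inv g ** e by rewrite {1}eg inv_mul (idem_inv Ie).
have eig : inv g = e ** inv g by rewrite {1}ge inv_mul (idem_inv Ie).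
have [join [meet [compl [Hjm [Hdistr Hc]]]]] := Hbool.2.
have [Ic [Mc Jc]] := Hc e Ie.
have ec : e ** compl e = zero.
  by rewrite -Mc; apply: glb_uniq (glb_mul Ie Ic) ((Hjm _ _ Ie Ic).2).
have ce : compl e ** e = zero by rewrite -(idem_comm Ie Ic).
move: Ic ec ce; set c := compl e => Ic ec ce.
have gc : g ** c = zero by rewrite ge -assoc ec zeror.
have cg : c ** g = zero by rewrite eg assoc ce zerol.
have igc : inv g ** c = zero by rewrite ige -assoc ec zeror.
have cig : c ** inv g = zero by rewrite eig assoc ce zerol.
have Iz : idem zero by rewrite zerol.
have Hcomp : compatible_set mul inv [set g; c].
  move=> a b /set2P[]-> /set2P[]->; split;
  rewrite /Defs.idempotent ?(idem_inv Ic) ?Hg1 ?Hg2 ?igc ?gc ?cig ?cg ?zerol ?Ic ?Ie //.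
have [t Ht] := Hjoin Hcomp.
have comm h : Defs.idempotent mul h -> h ** t = t ** h.
  move=> Ih; have [Hl Hr] := Hdist h Hcomp Ht.
  suff E : (fun a => a ** h) @: [set g; c] = mul h @: [set g; c].
    by apply: join_uniq Hl _; rewrite -E.
  apply: eq_in_imset => a /set2P[]-> /=; last exact: idem_comm.
  case: (Ae.2 (e ** h) (nle_idem e Ih)) => E.
    by rewrite [in LHS]ge -assoc E zeror [in RHS]eg assoc (idem_comm Ih Ie) E zerol.
  by rewrite [in LHS]ge -assoc E -ge [in RHS]eg assoc (idem_comm Ih Ie) E -eg.
have It : idem t := Hf t (fun h Ih => esym (comm h Ih)).
have Igd : idem g := nle_idem_idem It (Ht.1 g (set21 g c)).
have gE : g = e by rewrite -Hg1 (idem_inv Igd) Igd.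
by rewrite {1}(invax x).1 dx -gE /g assoc rx -ry invL.
Qed.

Lemma princ_fund : atom_groupoid_principal mul inv zero -> fundamental mul.
Proof.
move=> Hp s Hs.
have Hat a : atom mul inv zero a -> le a s -> idem a.
  move=> Aa Has.
  have Id : idem (inv a ** a) := idem_is a.
  have ac h : idem h -> a ** h = h ** a.
    move=> Ih; rewrite Has -assoc (idem_comm (idem_is a) Ih) assoc (Hs h Ih).
    by rewrite -assoc.
  have r_d : a ** inv a = inv a ** a.
    have E1 : a ** inv a = inv a ** a ** (a ** inv a).
      by rewrite assoc -(ac _ (idem_is a)) assoc invL.
    have E2 : inv a ** a = inv a ** a ** (a ** inv a).
      by rewrite -assoc (ac _ (idem_ss a)) invL.
    by rewrite {1}E1 -E2.
  have Ad : atom mul inv zero (inv a ** a).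
    split.
      by move=> D0; apply: Aa.1; rewrite (invax a).1 D0 zeror.
    move=> t Ht; have It : idem t := nle_idem_idem Id Ht.
    have tE := nle_idemE It Ht.
    case: (Aa.2 (a ** t) (nle_idem a It)) => E.
      by left; rewrite tE -assoc E zeror.
    by right; rewrite tE -assoc E.
  have Hd : inv (inv a ** a) ** (inv a ** a) = inv a ** a by rewrite (idem_inv Id) Id.
  have Hd' : (inv a ** a) ** inv (inv a ** a) = inv a ** a by rewrite (idem_inv Id) Id.
  have -> := Hp _ _ Ad Id Ad Id a (inv a ** a) (conj Aa (conj erefl r_d)) (conj Ad (conj Hd Hd')).
  exact: Id.
pose A := [set a | (a == s ** (inv a ** a)) && (a ** a == a)].
have HA : compatible_set mul inv A.
  move=> a b; rewrite !inE => /andP[_ /eqP Ia] /andP[_ /eqP Ib]; exact: compat_idem.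
have [j Hj] := Hjoin HA.
have [Hb1 [join [meet [compl [Hjm [_ Hc]]]]]] := Hbool.
have Ione : idem one := onel one.
have Ij : idem j.
  apply: nle_idem_idem Ione _; apply: Hj.2 => a; rewrite inE => /andP[_ /eqP Ia].
  exact: (Hb1 a Ia).2.
have js : j = s ** j.
  have : le j s by apply: Hj.2 => a; rewrite inE => /andP[/eqP Ha _].
  by rewrite /nle (idem_inv Ij) Ij.
have [Ic [Mc Jc]] := Hc j Ij.
move: Ic Mc Jc; set c := compl j => Ic Mc Jc.
have jc : j ** c = zero.
  by rewrite -Mc; apply: glb_uniq (glb_mul Ij Ic) ((Hjm _ _ Ij Ic).2).
have cj : c ** j = zero by rewrite -(idem_comm Ij Ic).
have sc : s ** c = zero.
  apply: NNPP => Hu; have [b [Ab Hb]] := atom_below Hu.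
  have Hbs : le b s := nle_trans Hb (nle_idem s Ic).
  have Ib := Hat b Ab Hbs.
  have bA : b \in A by rewrite inE; apply/andP; split; apply/eqP.
  have bj : b = j ** b := nle_idemE Ib (Hj.1 b bA).
  rewrite /nle (idem_inv Ib) Ib in Hb.
  apply: Ab.1.
  by rewrite {1}Hb -assoc {1}bj (assoc c j b) cj zerol zeror.
have Hjc : compatible_set mul inv [set j; c].
  by move=> a b /set2P[]-> /set2P[]->; apply: compat_idem.
have [x Hx] := Hjoin Hjc.
have Ix : idem x.
  apply: nle_idem_idem Ione _; apply: Hx.2 => a /set2P[]->; [exact: (Hb1 j Ij).2|exact: (Hb1 c Ic).2].
have x1 : x = one.
  rewrite -Jc; apply: lub_uniq ((Hjm _ _ Ij Ic).1).
  split=> //; split; first exact: (Hx.1 j (set21 j c)).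
  split; first exact: (Hx.1 c (set22 j c)).
  move=> g Ig Hjg Hcg; apply: Hx.2 => a /set2P[]-> //.
have [Hs1 _] := Hdist s Hjc Hx.
rewrite x1 oner in Hs1.
have : le s j.
  apply: Hs1.2 => a /imsetP[y /set2P[]-> ->].
    by rewrite -js; exact: nle_refl.
  by rewrite sc; exact: (Hb1 j Ij).1.
exact: nle_idem_idem Ij.
Qed.

End Pf.

Theorem mainTheorem4 (T : finType) (mul : T -> T -> T) (inv : T -> T) (one zero : T)
  (H : boolean_inverse_monoid mul inv one zero) :
  fundamental mul <-> atom_groupoid_principal mul inv zero.
Proof.
case: H => [[Ha [Hi Hu]] [Hone [Hzero [Hj [Hd Hb]]]]].
have assoc : forall a b c, mul a (mul b c) = mul (mul a b) c := Ha.
split.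
  exact: (fund_princ Ha Hi Hu (fun s => (Hzero s).1) (fun s => (Hzero s).2) Hj Hd Hb).
exact: (princ_fund Ha Hi Hu (fun s => (Hzero s).1) (fun s => (Hzero s).2)
  (fun s => (Hone s).1) (fun s => (Hone s).2) Hj Hd Hb).
Qed.
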